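(* Let $H^{(0)}=0$, $R=R^\top\succ0$, $Q=Q^\top\succeq0$, and let $H^{(i)}$ be generated by $H^{(i+1)}=G+\gamma M(L(H^{(i)}))^\top H^{(i)}M(L(H^{(i)}))$. Then for every $i>0$ and every $x\in\mathbb{R}^n$, $r_0,\dots,r_N\in\mathbb{R}^n$, the control $u=L(H^{(i)})[x^\top,r_1^\top,\dots,r_N^\top]^\top$ is the unique minimizer over $u\in\mathbb{R}^m$ of $\tfrac12 z^\top H^{(i)} z$, where $z=[x^\top,u^\top,r_0^\top,\dots,r_N^\top]^\top$.
   Context: Dimensions: $x,r_j\in\mathbb{R}^n$, $u\in\mathbb{R}^m$, $A\in\mathbb{R}^{n\times n}$, $B\in\mathbb{R}^{n\times m}$, $\gamma\in[0,1)$, $N\in\mathbb{N}$. Symmetric matrices $H$ of size $((N+2)n+m)$ are partitioned into blocks $h_{ab}$, $a,b\in\{x,u,r_0,\dots,r_N\}$. For $H$ with invertible $h_{uu}$, $L(H)=-h_{uu}^{-1}[h_{ux},h_{ur_1},\dots,h_{ur_N}]=[L_x,L_1,\dots,L_N]$, and $L(0):=0$. $G=\begin{bmatrix}Q&0&-Q&0\\0&R&0&0\\-Q&0&Q&0\\0&0&0&0\end{bmatrix}$ (blocks $x$, $u$, $r_0$, $(r_1,\dots,r_N)$). $M(L)$ is the square matrix mapping $[x;u;r_0;\dots;r_N]$ to $[Ax+Bu;\;L_x(Ax+Bu)+L_1r_2+\dots+L_{N-1}r_N;\;r_1;\dots;r_N;\;0]$. *)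

(* Defs.v *)
From HB Require Import structures.
From mathcomp Require Import all_boot all_order all_algebra.
Set Implicit Arguments. Unset Strict Implicit. Unset Printing Implicit Defensive.
Import Order.TTheory GRing.Theory Num.Theory.
Local Open Scope ring_scope.

(* Block layout of the big vector z = [x; u; r_0; r_1; ...; r_N] :
   z = col_mx x (col_mx u (col_mx r0 rs)) where rs : 'cV_(N*n) is the
   stack [r_1; ...; r_N] (r_j occupies entries (j-1)*n .. j*n - 1). *)
Notation dim n m N := (n + (m + (n + N * n)))%N.

Section Defs.
Variable F : realFieldType.

Definition sym_mx k (S : 'M[F]_k) := S^T = S.
Definition posdef_mx k (S : 'M[F]_k) :=
  sym_mx S /\ forall v : 'cV[F]_k, v != 0 -> 0 < (v^T *m S *m v) ord0 ord0.
Definition psd_mx k (S : 'M[F]_k) :=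
  sym_mx S /\ forall v : 'cV[F]_k, 0 <= (v^T *m S *m v) ord0 ord0.

Variables (n m N : nat).

Definition h_uu (H : 'M[F]_(dim n m N)) : 'M[F]_m := ulsubmx (drsubmx H).
Definition h_ux (H : 'M[F]_(dim n m N)) : 'M[F]_(m, n) := usubmx (dlsubmx H).
Definition h_urs (H : 'M[F]_(dim n m N)) : 'M[F]_(m, N * n) :=
  rsubmx (ursubmx (drsubmx H)).

(* L(H) = - h_uu^{-1} [h_ux, h_ur1, ..., h_urN] when h_uu is invertible;
   L(0) := 0 (and 0 whenever h_uu is singular). *)
Definition Lgain (H : 'M[F]_(dim n m N)) : 'M[F]_(m, n + N * n) :=
  if h_uu H \in unitmx then - (invmx (h_uu H) *m row_mx (h_ux H) (h_urs H))
  else 0.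

(* shift [r_1;...;r_N] |-> [r_2;...;r_N;0] *)
Definition shiftmx : 'M[F]_(N * n) :=
  \matrix_(i, j) (((j : nat) == i + n)%N)%:R.
(* [r_1;...;r_N] |-> r_1 *)
Definition firstmx : 'M[F]_(n, N * n) :=
  \matrix_(i, j) (((j : nat) == i)%N)%:R.

Variables (A : 'M[F]_n) (B : 'M[F]_(n, m)) (Q : 'M[F]_n) (R : 'M[F]_m).

(* G = [[Q,0,-Q,0],[0,R,0,0],[-Q,0,Q,0],[0,0,0,0]] *)
Definition Gmx : 'M[F]_(dim n m N) :=
  block_mx Q (row_mx 0 (row_mx (- Q) 0))
           (col_mx 0 (col_mx (- Q) 0))
           (block_mx R 0 0 (block_mx Q 0 0 0)).

(* M(L): [x;u;r0;r1..rN] |->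
   [Ax+Bu; Lx(Ax+Bu)+L1 r2+...+L_{N-1} rN; r1; ...; rN; 0] *)
Definition Mmx (L : 'M[F]_(m, n + N * n)) : 'M[F]_(dim n m N) :=
  let Lx := lsubmx L in let Lr := rsubmx L in
  block_mx A (row_mx B (row_mx 0 0))
           (col_mx (Lx *m A) (col_mx 0 0))
           (block_mx (Lx *m B) (row_mx 0 (Lr *m shiftmx))
                     0 (block_mx 0 firstmx 0 shiftmx)).

Fixpoint Hiter (gamma : F) (i : nat) : 'M[F]_(dim n m N) :=
  match i with
  | 0 => 0
  | i'.+1 => let H := Hiter gamma i' in
             Gmx + gamma *: ((Mmx (Lgain H))^T *m H *m Mmx (Lgain H))
  end.

Definition zvec (x : 'cV[F]_n) (u : 'cV[F]_m) (r0 : 'cV[F]_n)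
  (rs : 'cV[F]_(N * n)) : 'cV[F]_(dim n m N) :=
  col_mx x (col_mx u (col_mx r0 rs)).

Definition cost (H : 'M[F]_(dim n m N)) (z : 'cV[F]_(dim n m N)) : F :=
  2^-1 * (z^T *m H *m z) ord0 ord0.

End Defs.

(* Main.v *)
Require Import Defs.
From HB Require Import structures.
From mathcomp Require Import all_boot all_order all_algebra.
Import Order.TTheory GRing.Theory Num.Theory.
Local Open Scope ring_scope.
Set Implicit Arguments. Unset Strict Implicit.

Ltac bsimp := rewrite ?(mul_block_col, mul_row_col, mul_col_mx, mul_mx_row, mul_row_block, mul_col_row, mulmx_block, tr_col_mx, tr_row_mx, tr_block_mx, trmx0, trmx1, mul0mx, mulmx0, mulmx1, mul1mx, addr0, add0r, col_mx0, row_mx0, block_mx0, block_mxKdr, block_mxKul, block_mxKur, block_mxKdl, col_mxKu, col_mxKd, row_mxKl, row_mxKr, add_row_mx, add_col_mx).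

Section H.
Variable F : realFieldType.
Variables n m N : nat.
Local Notation D := (n + (m + (n + N * n)))%N.
Definition Eu : 'M[F]_(D, m) := col_mx 0 (col_mx 1%:M 0).
Definition Er : 'M[F]_(D, n) := col_mx 0 (col_mx 0 (col_mx 1%:M 0)).

Lemma EuHEu (H : 'M[F]_D) : Eu^T *m H *m Eu = h_uu H.
Proof.
rewrite /h_uu /Eu -{1}[H]submxK -{1}[drsubmx H]submxK. bsimp. done.
Qed.

Lemma EuHz (H : 'M[F]_D) x rs : Eu^T *m H *m zvec x 0 0 rs = row_mx (h_ux H) (h_urs H) *m col_mx x rs.
Proof.
rewrite /h_ux /h_urs /Eu /zvec -{1}[H]submxK -{1}[drsubmx H]submxK -{1}[dlsubmx H]vsubmxK -{1}[ursubmx (drsubmx H)]hsubmxK. by bsimp.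
Qed.

Lemma zvec_split x u r0 rs : zvec x u r0 rs = zvec x 0 0 rs + Er *m r0 + Eu *m u :> 'cV[F]_D.
Proof. by rewrite /zvec /Er /Eu; bsimp. Qed.

Variables (A : 'M[F]_n) (B : 'M[F]_(n, m)) (Q : 'M[F]_n) (R : 'M[F]_m).

Lemma MEr L : Mmx A B L *m Er = 0.
Proof. by rewrite /Mmx /Er; bsimp. Qed.

Lemma GEr : Eu^T *m Gmx N Q R *m Er = 0.
Proof. by rewrite /Gmx /Er /Eu; bsimp. Qed.

Lemma huuG : h_uu (Gmx N Q R) = R.
Proof. by rewrite /h_uu /Gmx; bsimp. Qed.

Lemma Gsym : sym_mx Q -> sym_mx R -> sym_mx (Gmx N Q R).
Proof. rewrite /sym_mx /Gmx => hQ hR; bsimp. by rewrite !linearN /= hQ hR. Qed.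

Lemma quadM k l (v : 'cV[F]_k) (M : 'M[F]_(l, k)) (H : 'M[F]_l) :
  v^T *m (M^T *m H *m M) *m v = (M *m v)^T *m H *m (M *m v).
Proof. by rewrite trmx_mul !mulmxA. Qed.

Lemma quadD k (v : 'cV[F]_k) (H1 H2 : 'M[F]_k) g :
  v^T *m (H1 + g *: H2) *m v = v^T *m H1 *m v + g *: (v^T *m H2 *m v).
Proof. by rewrite mulmxDr mulmxDl -scalemxAr -scalemxAl. Qed.

Lemma Gquad (v : 'cV[F]_D) : exists (y : 'cV[F]_n) (u : 'cV[F]_m),
  v^T *m Gmx N Q R *m v = y^T *m Q *m y + u^T *m R *m u.
Proof.
rewrite -[v]vsubmxK -[dsubmx v]vsubmxK -[dsubmx (dsubmx v)]vsubmxK.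
set x := usubmx v; set u := usubmx (dsubmx v); set r := usubmx (dsubmx (dsubmx v)); set s := dsubmx _.
exists (x - r), u. rewrite /Gmx; bsimp.
rewrite !mulmxN (linearB trmx) /= [in RHS]mulmxBr ![in RHS]mulmxBl mulmxDl mulNmx.
rewrite [(- _ + _) *m r]mulmxDl mulNmx opprB (addrC (- _) (_ *m r)) [_ *m u + _]addrC. by rewrite addrA.
Qed.

Lemma Gpsd : psd_mx Q -> psd_mx R -> forall v : 'cV[F]_D, 0 <= (v^T *m Gmx N Q R *m v) ord0 ord0.
Proof.
move=> [_ hQ] [_ hR] v. have [y [u ->]] := Gquad v. rewrite mxE. by apply: addr_ge0.
Qed.

Variable gamma : F.
Local Notation Hi := (Hiter N A B Q R gamma).

Lemma Hsym : sym_mx Q -> sym_mx R -> forall i, sym_mx (Hi i).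
Proof.
move=> hQ hR; elim=> [|i IH] /=; first by rewrite /sym_mx trmx0.
rewrite /sym_mx linearD linearZ /= !trmx_mul trmxK IH Gsym //. by rewrite mulmxA.
Qed.

Lemma Hpsd : psd_mx Q -> psd_mx R -> 0 <= gamma -> forall i (v : 'cV[F]_D), 0 <= (v^T *m Hi i *m v) ord0 ord0.
Proof.
move=> hQ hR hg; elim=> [|i IH] v /=; first by rewrite mulmx0 mul0mx mxE.
rewrite quadD quadM mxE [X in _ + X]mxE. apply: addr_ge0; first exact: Gpsd.
by apply: mulr_ge0.
Qed.

Lemma huu_pd : psd_mx Q -> posdef_mx R -> 0 <= gamma -> forall i, (0 < i)%N ->
  forall v : 'cV[F]_m, v != 0 -> 0 < (v^T *m h_uu (Hi i) *m v) ord0 ord0.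
Proof.
move=> hQ [hRs hR] hg [|i] // _ v v0.
have hRp : psd_mx R by split=> // w; case: (eqVneq w 0) => [->|/hR/ltW //]; rewrite mulmx0 mxE.
rewrite -EuHEu quadM /= quadD -quadM EuHEu huuG quadM mxE [X in _ + X]mxE.
apply: ltr_wpDr; last exact: hR.
apply: mulr_ge0 => //. exact: Hpsd.
Qed.


Lemma pd_unit (P : 'M[F]_m) : (forall v : 'cV[F]_m, v != 0 -> 0 < (v^T *m P *m v) ord0 ord0) -> P \in unitmx.
Proof.
move=> hP; rewrite unitmxE unitfE; apply/negP => /det0P [w w0 wP].
have := hP w^T; rewrite trmx_eq0 => /(_ w0); by rewrite trmxK wP mul0mx mxE ltxx.
Qed.

Lemma Er_zero i : (0 < i)%N -> Eu^T *m Hi i *m Er = 0.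
Proof.
case: i => [//|i] _ /=. rewrite mulmxDr mulmxDl GEr add0r -scalemxAr -scalemxAl -!mulmxA MEr.
by rewrite !mulmx0 scaler0.
Qed.
End H.

Lemma quad_shift (F : realFieldType) k m (H : 'M[F]_k) (E : 'M[F]_(k,m)) (z : 'cV_k) d : H^T = H -> E^T *m H *m z = 0 ->
 (z + E *m d)^T *m H *m (z + E *m d) = z^T *m H *m z + d^T *m (E^T *m H *m E) *m d.
Proof.
move=> hH hz.
have h3 : (E *m d)^T *m H *m z = 0 by rewrite trmx_mul -!mulmxA [E^T *m _]mulmxA hz mulmx0.
have h2 : z^T *m H *m (E *m d) = 0.
  have -> : z^T *m H *m (E *m d) = ((E *m d)^T *m H *m z)^T.
    by rewrite trmx_mul trmx_mul trmxK hH !mulmxA.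
  by have := congr1 trmx h3; rewrite trmx0.
rewrite (linearD trmx) /= mulmxDr !mulmxDl h2 h3 addr0 add0r trmx_mul !mulmxA. done.
Qed.


Theorem lemma5 (F : realFieldType) (n m N : nat)
  (A : 'M[F]_n) (B : 'M[F]_(n, m)) (Q : 'M[F]_n) (R : 'M[F]_m) (gamma : F) :
  posdef_mx R -> psd_mx Q -> 0 <= gamma -> gamma < 1 ->
  forall i : nat, (0 < i)%N ->
  forall (x r0 : 'cV[F]_n) (rs : 'cV[F]_(N * n)),
    let H := Hiter N A B Q R gamma i in
    let ustar := Lgain H *m col_mx x rs in
    (forall u : 'cV[F]_m, cost H (zvec x ustar r0 rs)
                          <= cost H (zvec x u r0 rs)) /\
    (forall u : 'cV[F]_m,
       (forall v : 'cV[F]_m, cost H (zvec x u r0 rs) <= cost H (zvec x v r0 rs)) ->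
       u = ustar).
Proof.
move=> hR hQ hg _ i hi x r0 rs H ustar.
have hs : H^T = H by apply: (Hsym N A B gamma); [case: hQ | case: hR].
have pd := huu_pd N A B hQ hR hg hi.
have hu : h_uu H \in unitmx by apply: pd_unit.
set P := h_uu H.
set b := row_mx (h_ux H) (h_urs H) *m col_mx x rs.
have eus : ustar = - (invmx P *m b) by rewrite /ustar /Lgain -/P hu mulNmx -mulmxA.
set zs := zvec x ustar r0 rs.
have key : forall u, zvec x u r0 rs = zs + Eu F n m N *m (u - ustar).
  move=> u; rewrite /zs !(zvec_split x _ r0 rs) mulmxBr (addrC (Eu F n m N *m u)) addrA addrK. done.
have hz : (Eu F n m N)^T *m H *m zs = 0.
  rewrite /zs eus zvec_split !mulmxDr !mulmxA EuHz (Er_zero N A B Q R gamma hi) mul0mx addr0 EuHEu -/P -/b.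
  by rewrite mulmxN !mulmxA mulmxV // mul1mx /b subrr.
have cid : forall u, cost H (zvec x u r0 rs) = cost H zs + 2^-1 * ((u - ustar)^T *m P *m (u - ustar)) ord0 ord0.
  move=> u; rewrite /cost key quad_shift // EuHEu -/P mxE mulrDr. done.
have h2 : 0 < (2^-1 : F) by rewrite invr_gt0 ltr0n.
split.
  move=> u; rewrite cid lerDl; apply: mulr_ge0; first exact: ltW.
  case: (eqVneq (u - ustar) 0) => [->|/pd/ltW //]; by rewrite mulmx0 mxE.
move=> u hmin; have := hmin ustar; rewrite cid -/zs gerDl.
case: (eqVneq (u - ustar) 0) => [/eqP + _|/pd nz]; first by rewrite subr_eq0 => /eqP.
by rewrite leNgt (mulr_gt0 h2 nz).
Qed.
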